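(* Suppose that $n_1,n_2$ are integers with $n_2\ge n_1\ge 34$. Then $$\frac{n_1}{n_1+n_2}\log\log(n_2)\le\frac12\log\log(n_1).$$
   Context: $\log$ denotes the natural logarithm. *)

(* Defs.v *)
From Stdlib Require Import Reals.

(* Main.v *)
Require Import Defs.
From Stdlib Require Import Reals Lra Psatz.
Open Scope R_scope.

Lemma ln_le_m1 x : 0 < x -> ln x <= x - 1.
Proof.
  intro H. pose proof (exp_ineq1_le (ln x)). rewrite exp_ln in H0; lra.
Qed.

Lemma ln_le' x y : 0 < x -> x <= y -> ln x <= ln y.
Proof.
  intros H1 H2. destruct (Req_dec x y) as [->|]; [lra|].
  left; apply ln_increasing; lra.
Qed.

Theorem lemma1 (n1 n2 : nat) :
  (34 <= n1)%nat -> (n1 <= n2)%nat ->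
  INR n1 / (INR n1 + INR n2) * ln (ln (INR n2)) <= 1 / 2 * ln (ln (INR n1)).
Proof.
  intros H1 H2.
  apply le_INR in H1, H2.
  replace (INR 34) with 34 in H1 by (simpl; lra).
  set (a := INR n1) in *. set (b := INR n2) in *.
  assert (e3 : exp 3 <= 27).
  { replace 3 with (1+1+1) by lra. rewrite !exp_plus.
    pose proof exp_le_3. pose proof (exp_pos 1). nra. }
  assert (la3 : 3 <= ln a).
  { rewrite <- (ln_exp 3). apply ln_le'. apply exp_pos. lra. }
  assert (lb : ln a <= ln b) by (apply ln_le'; lra).
  assert (L1 : 1 <= ln (ln a)).
  { rewrite <- (ln_exp 1). apply ln_le'. apply exp_pos. pose proof exp_le_3. lra. }
  assert (D1 : ln (ln b) - ln (ln a) <= (ln b - ln a) / ln a).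
  { replace (ln (ln b)) with (ln (ln a * (ln b / ln a))).
    rewrite ln_mult by (try apply Rdiv_lt_0_compat; lra).
    pose proof (ln_le_m1 (ln b / ln a)).
    replace ((ln b - ln a) / ln a) with (ln b / ln a - 1) by (field; apply Rgt_not_eq; lra).
    apply Rle_trans with (ln b / ln a - 1); [|lra].
    assert (0 < ln b / ln a) by (apply Rdiv_lt_0_compat; lra). lra.
    f_equal. field. apply Rgt_not_eq; lra. }
  assert (D2 : ln b - ln a <= (b - a) / a).
  { replace (ln b) with (ln (a * (b / a))).
    rewrite ln_mult by (try apply Rdiv_lt_0_compat; lra).
    pose proof (ln_le_m1 (b / a)).
    assert (0 < b / a) by (apply Rdiv_lt_0_compat; lra).
    replace ((b - a) / a) with (b / a - 1) by (field; apply Rgt_not_eq; lra). lra.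
    f_equal. field. apply Rgt_not_eq; lra. }
  set (la := ln a) in *. set (d := ln (ln b) - ln (ln a)).
  set (L := ln (ln a)) in *.
  assert (Hd : d * la <= ln b - la).
  { unfold d. apply (Rmult_le_compat_r la) in D1; [|lra].
    unfold Rdiv in D1. replace ((ln b - la) * / la * la) with (ln b - la) in D1 by (field; apply Rgt_not_eq; unfold la in *; lra). unfold L, la in *. lra. }
  assert (Hd2 : a * (ln b - la) <= b - a).
  { apply (Rmult_le_compat_l a) in D2; [|lra].
    unfold Rdiv in D2. replace (a * ((b - a) * / a)) with (b - a) in D2 by (field; apply Rgt_not_eq; lra). lra. }
  assert (Hk : 2 * a * d <= (b - a) * L).
  { unfold d, L, la in *.
    remember (ln (ln b)) as z. remember (ln (ln a)) as y.
    remember (ln b) as w. remember (ln a) as x.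
    assert (A1 : a * ((z - y) * x) <= a * (w - x)) by (apply Rmult_le_compat_l; lra).
    assert (A2 : 3 <= y * x) by nra.
    assert (A3 : 2 * (b - a) <= (b - a) * (y * x)) by nra.
    assert (A4 : (2 * a * (z - y)) * x <= ((b - a) * y) * x) by nra.
    apply Rmult_le_reg_r with x; [lra| exact A4]. }
  replace (ln (ln b)) with (L + d) by (unfold d, L; ring).
  apply Rmult_le_reg_l with (2 * (a + b)); [lra|].
  replace (2 * (a + b) * (a / (a + b) * (L + d))) with (2 * a * (L + d)) by (field; apply Rgt_not_eq; lra).
  change (ln la) with L. clearbody d L. nra.
Qed.
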